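(* Every finite solvable group has the $E1$-property.
   Context: For a finite group $G$, a finite-dimensional $\mathbb{R}G$-module $V$ with representation $\rho\colon G\to\mathrm{GL}(V)$, and $n\in\mathrm{GL}(V)$ of finite order normalizing $\rho(G)$, the triple $(G,V,n)$ has the $E1$-property if there is $g\in G$ such that $\rho(g)n$ has eigenvalue $1$. The pair $(G,V)$ has the $E1$-property if $(G,V,n')$ has the $E1$-property for every $n'\in\mathrm{GL}(V)$ of finite order normalizing $\rho(G)$. The group $G$ has the $E1$-property if $(G,V')$ has the $E1$-property for every irreducible, non-trivial $\mathbb{R}G$-module $V'$ of odd dimension. *)

(* Defs.v *)
From HB Require Import structures.
From mathcomp Require Import all_boot all_order all_algebra all_fingroup all_solvable all_character.
From mathcomp Require Import Rstruct.
From Stdlib Require Rdefinitions.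
Notation R := Rdefinitions.R.
Set Implicit Arguments. Unset Strict Implicit. Unset Printing Implicit Defensive.
Import GRing.Theory.
Local Open Scope ring_scope.

(* Real representations of a finite group G on V = R^d (row-vector convention of
   mxrepresentation: rG g acts on the right).  R is Stdlib's real numbers. *)

Definition normalizing_finite_order (gT : finGroupType) (G : {group gT}) (d : nat)
    (rG : mx_representation R G d) (N : 'M[R]_d) : Prop :=
  [/\ N \in unitmx,
      exists2 k : nat, (0 < k)%N & N ^+ k = 1%:M,
      forall g, g \in G -> exists2 h, h \in G & N *m rG g *m invmx N = rG h
    & forall h, h \in G -> exists2 g, g \in G & N *m rG g *m invmx N = rG h].

Definition E1_triple (gT : finGroupType) (G : {group gT}) (d : nat)
    (rG : mx_representation R G d) (N : 'M[R]_d) : Prop :=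
  exists2 g, g \in G & eigenvalue (rG g *m N) 1.

Definition E1_pair (gT : finGroupType) (G : {group gT}) (d : nat)
    (rG : mx_representation R G d) : Prop :=
  forall N : 'M[R]_d, normalizing_finite_order rG N -> E1_triple rG N.

Definition nontrivial_repr (gT : finGroupType) (G : {group gT}) (d : nat)
    (rG : mx_representation R G d) : Prop :=
  exists2 g, g \in G & rG g != 1%:M.

Definition E1_group (gT : finGroupType) (G : {group gT}) : Prop :=
  forall (d : nat) (rG : mx_representation R G d),
    mx_irreducible rG -> nontrivial_repr rG -> odd d -> E1_pair rG.

(* Main.v *)
Require Import Defs.
From HB Require Import structures.
From mathcomp Require Import all_boot all_order all_algebra all_fingroup all_solvable all_character.
From mathcomp Require Import Rstruct polyrcf.
Require Import Defs.
Set Implicit Arguments. Unset Strict Implicit. Unset Printing Implicit Defensive.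
Import Order.TTheory GRing.Theory Num.Theory.
Local Open Scope ring_scope.
Lemma odd_stable_eig (d : nat) (U b : 'M[R]_d) :
  (U *m b <= U)%MS -> odd (\rank U) ->
  exists2 v : 'rV[R]_d, (v != 0) && (v <= U)%MS & exists l : R, v *m b = l *: v.
Proof.
move=> sUb oU.
set B := row_base U.
have sBb : (B *m b <= B)%MS.
  rewrite eq_row_base; apply: submx_trans sUb; by rewrite submxMr // /B eq_row_base.
set C := B *m b *m pinvmx B.
have CB : C *m B = B *m b by exact: mulmxKpV sBb.
have [l rl] : {l | root (char_poly C) l}.
  by apply: odd_poly_root; rewrite size_char_poly /= negbK.
move: rl; rewrite -eigenvalue_root_char => /eigenvalueP [w wC wn0].
exists (w *m B).
  have -> : (w *m B <= U)%MS by rewrite (submx_trans (submxMl _ _)) // /B eq_row_base.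
  rewrite andbT.
  apply/eqP => /(congr1 (mulmx^~ (pinvmx B))).
  by rewrite mulmxKp ?row_base_free // mul0mx; apply/eqP.
exists l; by rewrite -mulmxA -CB mulmxA wC scalemxAl.
Qed.

Lemma eig_pow (m d : nat) (b : 'M[R]_d) (v : 'M_(m,d)) (l : R) k :
  v *m b = l *: v -> v *m b ^+ k = l ^+ k *: v.
Proof.
move=> e; elim: k => [|k IH]; first by rewrite !expr0 mulmx1 scale1r.
by rewrite exprSr -mulmxE mulmxA IH -scalemxAl e scalerA -exprSr.
Qed.

Lemma real_root1 (l : R) k : (0 < k)%N -> l ^+ k = 1 -> l = 1 \/ l = -1.
Proof.
move=> k0 e.
have : `|l| == 1 by rewrite -(pexpr_eq1 k0) // -normrX e normr1.
rewrite -sqr_norm_eq1 sqrf_eq1 => /orP [] /eqP ->; by [left | right].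
Qed.

Lemma eig_fin (d : nat) (b : 'M[R]_d) (v : 'rV_d) (l : R) k :
  (0 < k)%N -> b ^+ k = 1 -> v != 0 -> v *m b = l *: v -> l = 1 \/ l = -1.
Proof.
move=> k0 bk vn0 e; apply: (real_root1 k0).
have := eig_pow k e; rewrite bk mulmx1 => /eqP.
rewrite -subr_eq0 -{1}(scale1r v) -scalerBl scaler_eq0 (negbTE vn0) orbF subr_eq0.
by move/eqP.
Qed.

Section Parity.
Variables (d p : nat) (b : 'M[R]_d).
Hypotheses (p_odd : odd p) (bp : b ^+ p = 1).

Let E := (p%:R)^-1 *: \sum_(j < p) b ^+ j.

Let p_pos : (0 < p)%N. Proof. by case: p p_odd. Qed.
Let pR0 : (p%:R : R) != 0. Proof. by rewrite pnatr_eq0 -lt0n p_pos. Qed.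

Let sum_shift : \sum_(j < p) b ^+ j.+1 = \sum_(j < p) b ^+ j.
Proof.
case: p p_pos bp => // q _ bq.
by rewrite big_ord_recr big_ord_recl /= bq expr0 addrC.
Qed.

Let Eb : E *m b = E.
Proof.
rewrite /E -scalemxAl mulmx_suml; congr (_ *: _).
by rewrite -sum_shift; apply: eq_bigr => j _; rewrite mulmxE -exprSr.
Qed.

Let bE : b *m E = E.
Proof.
rewrite /E -scalemxAr mulmx_sumr; congr (_ *: _).
by rewrite -sum_shift; apply: eq_bigr => j _; rewrite mulmxE -exprS.
Qed.

Let fixE m (v : 'M_(m, d)) : v *m b = v -> v *m E = v.
Proof.
move=> vb; rewrite /E -scalemxAr mulmx_sumr.
rewrite (eq_bigr (fun _ => v)); last first.
  by move=> j _; rewrite (eig_pow j (l := 1)) ?expr1n ?scale1r // scale1r.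
by rewrite sumr_const card_ord -scaler_nat scalerA mulVf // scale1r.
Qed.

Let EE : E *m E = E.
Proof. exact: fixE Eb. Qed.

Lemma parity_step (U : 'M[R]_d) : (U *m b <= U)%MS ->
  odd (\rank (U :&: kermx (b - 1%:M))) = odd (\rank U).
Proof.
move=> sUb.
have sUbj j : (U *m b ^+ j <= U)%MS.
  elim: j => [|j IH]; first by rewrite expr0 mulmx1.
  rewrite exprSr -mulmxE mulmxA; apply: submx_trans sUb.
  exact: submxMr.
have sUE : (U *m E <= U)%MS.
  rewrite /E -scalemxAr scalemx_sub // mulmx_sumr summx_sub //. 
set K1 := (U :&: kermx (b - 1%:M))%MS.
set K2 := U *m (1%:M - E).
have sK2 : (K2 <= U)%MS.
  by rewrite /K2 mulmxBr mulmx1 addmx_sub // eqmx_opp.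
have K2E : K2 *m E = 0 by rewrite /K2 -mulmxA mulmxBl mul1mx EE subrr mulmx0.
have dir : mxdirect (K1 + K2).
  apply/mxdirect_addsP.
  set X := (K1 :&: K2)%MS.
  have XK1 : (X <= K1)%MS by exact: capmxSl.
  have XK2 : (X <= K2)%MS by exact: capmxSr.
  have Xb : X *m b = X.
    move: XK1; rewrite sub_capmx sub_kermx => /andP [_].
    by rewrite mulmxBr mulmx1 subr_eq0 => /eqP.
  have := fixE Xb.
  move/submxP: XK2 => [D ->].
  by rewrite -mulmxA K2E mulmx0 => <-.
have rU' : \rank (K1 + K2)%MS = \rank U.
  apply: eqmx_rank; apply/andP; split; first by rewrite addsmx_sub capmxSl.
  have -> : U = U *m E + K2 by rewrite /K2 mulmxBr mulmx1 addrC subrK.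
  apply: addmx_sub_adds => //.
  by rewrite sub_capmx sUE sub_kermx mulmxBr -mulmxA Eb mulmx1 subrr eqxx.
have rU : \rank U = (\rank K1 + \rank K2)%N.
  by rewrite -rU'; move/mxdirectP: dir.
have K2ev : ~~ odd (\rank K2).
  apply/negP => oK2.
  have sK2b : (K2 *m b <= K2)%MS.
    rewrite /K2 -mulmxA mulmxBl mul1mx Eb -{1}bE -{1}(mulmx1 b) -mulmxBr mulmxA.
    exact: submxMr.
  have [v /andP [vn0 vK2] [l vb]] := odd_stable_eig sK2b oK2.
  have [l1|lm1] := eig_fin p_pos bp vn0 vb.
    move: vb; rewrite l1 scale1r => /fixE vE.
    move/submxP: vK2 => [D vD].
    move: vE; rewrite vD -mulmxA K2E mulmx0 => v0.
    by move: vn0; rewrite vD -v0 eqxx.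
  have := eig_pow p vb; rewrite bp mulmx1 lm1.
  rewrite -signr_odd p_odd expr1 scaleN1r => /eqP.
  rewrite -subr_eq0 opprK -mulr2n -scaler_nat scaler_eq0 pnatr_eq0 /=.
  by rewrite (negbTE vn0).
by rewrite rU oddD (negbTE K2ev) addbF.
Qed.

End Parity.

Lemma parity_list (d p : nat) (T : eqType) (f : T -> 'M[R]_d) (s : seq T) :
  odd p -> (forall t, t \in s -> f t ^+ p = 1) ->
  (forall t u, t \in s -> u \in s -> f t *m f u = f u *m f t) ->
  forall U : 'M[R]_d, (forall t, t \in s -> (U *m f t <= U)%MS) ->
  odd (\rank (U :&: \bigcap_(t <- s) kermx (f t - 1%:M))%MS) = odd (\rank U).
Proof.
move=> po; elim: s => [|x s IH] fp fc U sU.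
  by rewrite big_nil capmx1.
rewrite big_cons capmxA.
have xs : x \in x :: s by rewrite inE eqxx.
rewrite IH; first by rewrite (parity_step po (fp x xs)) // sU.
- by move=> t ts; rewrite fp // inE ts orbT.
- by move=> t u ts us; rewrite fc // inE ?ts ?us orbT.
move=> t ts.
have txs : t \in x :: s by rewrite inE ts orbT.
rewrite sub_capmx; apply/andP; split.
  apply: submx_trans (sU t txs); apply: submxMr; exact: capmxSl.
rewrite sub_kermx -mulmxA mulmxBr mulmx1 fc // -{2}(mul1mx (f t)) -mulmxBl.
rewrite mulmxA; apply/eqP.
have : (U :&: kermx (f x - 1%:M) <= kermx (f x - 1%:M))%MS by exact: capmxSr.
by rewrite sub_kermx => /eqP ->; rewrite mul0mx.
Qed.

Section Weights.
Variables (d : nat) (I : finType) (M : I -> 'M[R]_d).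
Hypotheses (Mc : forall i j, M i *m M j = M j *m M i)
           (M2 : forall i, M i *m M i = 1%:M).

Definition sgn (c : bool) : R := if c then -1 else 1.
Lemma sgn2 c : sgn c * sgn c = 1.
Proof. by case: c; rewrite /= ?mulrNN mulr1. Qed.

Definition W (ch : {ffun I -> bool}) : 'M[R]_d :=
  (\bigcap_i kermx (M i - (sgn (ch i))%:M))%MS.

Lemma subW m (X : 'M_(m, d)) ch :
  (X <= W ch)%MS <-> (forall i, X *m M i = sgn (ch i) *: X).
Proof.
split.
  move/sub_bigcapmxP => H i; have := H i isT.
  by rewrite sub_kermx mulmxBr mul_mx_scalar subr_eq0 => /eqP.
move=> H; apply/sub_bigcapmxP => i _.
by rewrite sub_kermx mulmxBr mul_mx_scalar H subrr.
Qed.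

Definition fac i c : 'M[R]_d := 2^-1 *: (1%:M + sgn c *: M i).

Let two0 : (2 : R) != 0. Proof. by rewrite pnatr_eq0. Qed.

Lemma fac_act m (X : 'M_(m, d)) i c s :
  X *m M i = sgn s *: X -> X *m fac i c = (if c == s then X else 0).
Proof.
move=> e; rewrite /fac -scalemxAr mulmxDr mulmx1 -scalemxAr e scalerA.
clear e; case: c; case: s => /=;
  rewrite ?mulrNN ?mulr1 ?mul1r ?mulN1r ?scaleN1r ?scale1r ?subrr ?scaler0 //;
  by rewrite -mulr2n -scaler_nat scalerA mulVf // scale1r.
Qed.

Definition P (ch : {ffun I -> bool}) : 'M[R]_d := \prod_i fac i (ch i).

Lemma prod_act_seq m (X : 'M_(m, d)) (s : I -> bool) ch r :
  (forall i, X *m M i = sgn (s i) *: X) ->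
  X *m \prod_(i <- r) fac i (ch i) = if all (fun i => ch i == s i) r then X else 0.
Proof.
move=> H; elim: r => [|x r IH]; first by rewrite big_nil mulmx1.
rewrite big_cons -mulmxE mulmxA (fac_act _ (H x)) /=.
by case: (ch x == s x) => //=; rewrite mul0mx.
Qed.

Lemma P_act m (X : 'M_(m, d)) (s : I -> bool) ch :
  (forall i, X *m M i = sgn (s i) *: X) ->
  X *m P ch = if [forall i, ch i == s i] then X else 0.
Proof.
move=> H; rewrite /P (prod_act_seq _ _ H).
have -> // : all (fun i => ch i == s i) (index_enum I) = [forall i, ch i == s i].
apply/allP/forallP => [K i | K i _]; last exact: K.
by apply: K; rewrite mem_index_enum.
Qed.

Lemma W_P m (X : 'M_(m, d)) ch : (X <= W ch)%MS -> X *m P ch = X.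
Proof.
move/subW => H; rewrite (P_act _ H).
by have -> : [forall i, ch i == ch i] by apply/forallP => i.
Qed.

Lemma W_P0 m (X : 'M_(m, d)) ch ps : (X <= W ps)%MS -> ps != ch -> X *m P ch = 0.
Proof.
move/subW => H nps; rewrite (P_act _ H).
case: forallP => // K; case/eqP: nps; apply/ffunP => i.
by apply/eqP; rewrite eq_sym K.
Qed.

Lemma sign_P m (X : 'M_(m, d)) (s : I -> bool) ch :
  (forall i, X *m M i = sgn (s i) *: X) -> X *m P ch != 0 -> (X <= W ch)%MS.
Proof.
move=> H; rewrite (P_act _ H); case: forallP => [K _|_]; last by rewrite eqxx.
by apply/subW => i; rewrite H (eqP (K i)).
Qed.

Lemma M_fac_comm i j c : M i *m fac j c = fac j c *m M i.
Proof.
rewrite /fac -scalemxAr -scalemxAl mulmxDr mulmxDl mulmx1 mul1mx.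
by rewrite -scalemxAr -scalemxAl Mc.
Qed.

Lemma M_fac i c : M i *m fac i c = sgn c *: fac i c.
Proof.
rewrite /fac -scalemxAr mulmxDr mulmx1 -scalemxAr M2 scalerA mulrC -scalerA; congr (_ *: _).
by rewrite scalerDr scalerA sgn2 scale1r addrC scalemx1.
Qed.

Lemma MP_seq i ch r : i \in r ->
  M i *m \prod_(j <- r) fac j (ch j) = sgn (ch i) *: \prod_(j <- r) fac j (ch j).
Proof.
elim: r => [|x r IH] //; rewrite inE big_cons -mulmxE.
case: (eqVneq i x) => [<- _ | nix /= ir].
  by rewrite mulmxA M_fac scalemxAl.
by rewrite mulmxA M_fac_comm -mulmxA IH // scalemxAr.
Qed.

Lemma P_W ch : (P ch <= W ch)%MS.
Proof.
apply/subW => i.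
have cP : GRing.comm (M i) (P ch).
  by apply: commr_prod => j _; rewrite /GRing.comm -!mulmxE M_fac_comm.
by rewrite mulmxE -cP -mulmxE /P MP_seq // mem_index_enum.
Qed.

Lemma sumP : \sum_ch P ch = 1%:M.
Proof.
rewrite /P -(bigA_distr_bigA (fun i c => fac i c)) /=.
rewrite big1 // => i _; rewrite big_bool /= /fac -scalerDr addrACA.
rewrite /sgn scaleN1r scale1r addNr addr0 -mulr2n -scaler_nat scalerA mulVf //.
by rewrite scale1r.
Qed.

Lemma W_direct : mxdirect (\sum_ch W ch).
Proof.
apply/mxdirect_sumsP => ch _.
set X := (W ch :&: _)%MS.
have XW : (X <= W ch)%MS by exact: capmxSl.
have XS : (X <= \sum_(ps | true && (ps != ch)) W ps)%MS by exact: capmxSr.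
rewrite -(W_P XW).
move/sub_sumsmxP: XS => [u ->].
rewrite mulmx_suml big1 // => ps /andP [_ nps].
by rewrite -mulmxA (W_P0 (submx_refl _) nps) mulmx0.
Qed.

Lemma W_full : (1%:M <= \sum_ch W ch)%MS.
Proof. rewrite -sumP; apply: summx_sub_sums => ch _; exact: P_W. Qed.

Lemma W_rank : (\sum_ch \rank (W ch))%N = d.
Proof.
have := W_direct; move/mxdirectP => /= <-.
apply/eqP; rewrite eqn_leq rank_leq_col /= -{1}(mxrank1 R d).
exact: mxrankS W_full.
Qed.

End Weights.

Section Rep.
Variables (gT : finGroupType) (G : {group gT}) (d : nat)
  (rG : mx_representation R G d).

Lemma repr_X x k : x \in G -> rG (x ^+ k)%g = rG x ^+ k.
Proof.
move=> xG; elim: k => [|k IH]; first by rewrite expg0 repr_mx1 expr0.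
by rewrite expgS repr_mxM ?groupX // IH exprS mulmxE.
Qed.

Variable N : 'M[R]_d.
Hypothesis nN : normalizing_finite_order rG N.

Lemma N_unit : N \in unitmx. Proof. by case: nN. Qed.

Lemma N_conj h : h \in G -> exists2 h', h' \in G & N *m rG h = rG h' *m N.
Proof.
case: nN => Nu _ fw _ hG; have [h' h'G e] := fw h hG.
by exists h' => //; rewrite -e mulmxKV.
Qed.

Lemma N_conjX j h : h \in G -> exists2 h', h' \in G & N ^+ j *m rG h = rG h' *m N ^+ j.
Proof.
elim: j h => [|j IH] h hG; first by exists h; rewrite // expr0 mul1mx mulmx1.
have [h1 h1G e1] := N_conj hG; have [h2 h2G e2] := IH h1 h1G.
exists h2 => //; rewrite exprSr -mulmxE -mulmxA e1 mulmxA e2 -mulmxA.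
by rewrite mulmxE -exprSr.
Qed.

Lemma x_pow h j : h \in G -> exists2 h', h' \in G & (N *m rG h) ^+ j = rG h' *m N ^+ j.
Proof.
move=> hG; elim: j => [|j [h1 h1G e1]]; first by exists 1%g; rewrite ?group1 // expr0 repr_mx1 mul1mx.
have [h2 h2G e2] := N_conjX j.+1 hG.
exists (h1 * h2)%g; first by rewrite groupM.
rewrite !mulmxE in e2.
rewrite [(N *m rG h) ^+ _]exprSr e1 !mulmxE repr_mxM // mulmxE mulrA -(mulrA _ _ N) -exprSr.
by rewrite -mulrA e2 mulrA.
Qed.

Lemma x_fin h : h \in G -> exists2 k, (0 < k)%N & (N *m rG h) ^+ k = 1.
Proof.
move=> hG; case: nN => _ [k k0 Nk] _ _.
have [h' h'G e] := x_pow k hG.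
exists (k * #[h']%g)%N; first by rewrite muln_gt0 k0 order_gt0.
by rewrite exprM e Nk mulmx1 -repr_X // expg_order repr_mx1.
Qed.

End Rep.

Section StepB.
Variables (gT : finGroupType) (G : {group gT}) (d : nat)
  (rG : mx_representation R G d) (N : 'M[R]_d) (I : finType) (M : I -> 'M[R]_d).
Hypotheses (irr : mx_irreducible rG) (oddd : odd d)
  (nN : normalizing_finite_order rG N)
  (Mc : forall i j, M i *m M j = M j *m M i)
  (M2 : forall i, M i *m M i = 1%:M)
  (Mrep : forall i, exists2 a, a \in G & M i = rG a)
  (MG : forall h, h \in G -> exists f : I -> I, forall i, rG h *m M i = M (f i) *m rG h)
  (MN : exists f : I -> I, forall i, N *m M i = M (f i) *m N)
  (Mnt : exists i, M i != 1%:M).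

Lemma CW (Q : 'M[R]_d) (f : I -> I) (Qf : forall i, Q *m M i = M (f i) *m Q)
   m (X : 'M_(m, d)) ch :
  (X <= W M ch)%MS -> forall i, X *m Q *m M i = sgn (ch (f i)) *: (X *m Q).
Proof.
move/subW => H i; by rewrite -mulmxA Qf mulmxA H scalemxAl.
Qed.

Let irrfull (U : 'M[R]_d) : mxmodule rG U -> U != 0 -> (1%:M <= U)%MS.
Proof. by case/mx_irrP: irr => _ H mU nU; rewrite sub1mx H. Qed.

Lemma stepB : E1_triple rG N.
Proof.
have [ch och] : exists ch, odd (\rank (W M ch)).
  case: (boolP [exists ch, odd (\rank (W M ch))]) => [/existsP //|/existsPn H].
  exfalso; move: oddd; rewrite -(W_rank Mc M2); apply/negP.
  elim/big_ind: _ => // x y ox oy.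
  by rewrite oddD (negbTE ox) (negbTE oy).
set Wc := W M ch.
have Wc0 : Wc != 0 by rewrite -mxrank_eq0; apply/eqP => e; rewrite e in och.
have [i0 chi0] : exists i0, ch i0.
  case: (boolP [exists i, ch i]) => [/existsP //|/existsPn H].
  have mW : mxmodule rG Wc.
    apply/mxmoduleP => h hG.
    have [f Hf] := MG hG.
    apply/subW => i; rewrite (CW Hf (submx_refl Wc)).
    by rewrite (negbTE (H (f i))) (negbTE (H i)).
  have := irrfull mW Wc0; move/subW => H1.
  case: Mnt => i; have := H1 i; rewrite mul1mx (negbTE (H i)) /= scale1r => ->.
  by rewrite eqxx.
have [fN HfN] := MN.
pose psi := [ffun i => ch (fN i)].
set X := Wc *m N.
have Nu := N_unit nN.
have X0 : X != 0.
  apply: contra Wc0 => /eqP X0; apply/eqP.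
  by rewrite -(mulmxK Nu Wc) -/X X0 mul0mx.
have XW : (X <= W M psi)%MS.
  by apply/subW => i; rewrite (CW HfN (submx_refl Wc)) ffunE.
set Y := (\sum_(g in G) (Wc *m rG g))%MS.
have mY : mxmodule rG Y.
  apply/mxmoduleP => h hG; rewrite /Y sumsmxMr.
  apply/sumsmx_subP => g gG.
  rewrite -mulmxA -repr_mxM //; apply: (sumsmx_sup (g * h)%g) => //.
  by rewrite groupM.
have Y0 : Y != 0.
  apply: contra Wc0 => /eqP Y0; rewrite -submx0 -Y0.
  by apply: (sumsmx_sup 1%g) => //; rewrite repr_mx1 mulmx1.
have XY : (X <= Y)%MS by apply: submx_trans (irrfull mY Y0); exact: submx1.
have [g gG gnz] : exists2 g, g \in G & Wc *m rG g *m P M psi != 0.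
  case: (boolP [exists g in G, Wc *m rG g *m P M psi != 0]) => [/exists_inP //|/exists_inPn H].
  move: X0; rewrite -(W_P XW).
  move/sub_sumsmxP: XY => [u ->].
  rewrite mulmx_suml big1 ?eqxx // => g gG.
  by rewrite -mulmxA (eqP (negbNE (H g gG))) mulmx0.
have [fg Hfg] := MG gG.
have Z1W : (Wc *m rG g <= W M psi)%MS.
  exact: (sign_P (CW Hfg (submx_refl Wc))).
set h := (g^-1)%g.
have hG : h \in G by rewrite groupV.
have [fh Hfh] := MG hG.
set Z := W M psi *m rG h.
have WcZ : (Wc <= Z)%MS.
  have -> : Wc = Wc *m rG g *m rG h.
    by rewrite -mulmxA -repr_mxM // mulgV repr_mx1 mulmx1.
  exact: submxMr.
have ZW : (Z <= Wc)%MS.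
  apply: (sign_P (CW Hfh (submx_refl (W M psi)))).
  apply: contra Wc0 => /eqP Z0.
  move/submxP: WcZ => [D eD].
  by rewrite -(W_P (submx_refl Wc)) eD -mulmxA Z0 mulmx0.
set x := N *m rG h.
have sWx : (Wc *m x <= Wc)%MS.
  by rewrite mulmxA; apply: submx_trans ZW; apply: submxMr.
have [v /andP [vn0 vW] [l vx]] := odd_stable_eig sWx och.
have [k k0 xk] := x_fin nN hG.
have [h2 h2G e2] := N_conj nN hG.
have [l1|lm1] := eig_fin k0 xk vn0 vx.
  exists h2 => //; apply/eigenvalueP; exists v => //.
  by rewrite -e2 -/x vx l1.
have [a aG Ma] := Mrep i0.
exists (a * h2)%g; first by rewrite groupM.
apply/eigenvalueP; exists v => //.
rewrite repr_mxM // -mulmxA -e2 -/x mulmxA -Ma.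
move/subW: vW => vM; rewrite vM chi0 /= scaleN1r mulNmx vx lm1 scaleN1r opprK.
by rewrite scale1r.
Qed.

End StepB.

Section StepA.
Variables (gT : finGroupType) (G : {group gT}) (d : nat)
  (rG : mx_representation R G d) (N : 'M[R]_d).
Hypothesis nN : normalizing_finite_order rG N.

Let Nu : N \in unitmx. Proof. exact: N_unit nN. Qed.

Definition phi (X : 'M[R]_d) := N *m X *m invmx N.

Lemma phiM X Y : phi (X *m Y) = phi X *m phi Y.
Proof. by rewrite /phi !mulmxA mulmxKV. Qed.

Lemma phi1 : phi 1%:M = 1%:M.
Proof. by rewrite /phi mulmx1 mulmxV. Qed.

Lemma phiX X j : phi (X ^+ j) = phi X ^+ j.
Proof.
elim: j => [|j IH]; first by rewrite !expr0 phi1.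
by rewrite !exprS -!mulmxE phiM IH.
Qed.

Definition Stab (K : {set gT}) :=
  forall a, a \in K -> exists2 h, h \in K & phi (rG a) = rG h.

Lemma StabG : Stab G.
Proof. by case: nN => _ _ fw _ a aG; have [h hG e] := fw a aG; exists h. Qed.

Lemma Stab_inv (K : {group gT}) a h : K \subset G -> a \in K -> h \in K ->
  phi (rG a) = rG h -> phi (rG (a^-1)%g) = rG (h^-1)%g.
Proof.
move=> sKG aK hK e.
have aG : a \in G := subsetP sKG a aK.
have hG : h \in G := subsetP sKG h hK.
rewrite -[phi _]mulmx1 -(repr_mx1 rG) -(mulgV h) repr_mxM ?groupV // mulmxA -e.
by rewrite -phiM -repr_mxM ?groupV // mulVg repr_mx1 phi1 mul1mx.
Qed.

Lemma Stab_der (K : {group gT}) : K \subset G -> Stab K -> Stab (K^`(1))%g.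
Proof.
move=> sKG sK.
have sK1G : K^`(1)%g \subset G by apply: subset_trans sKG; apply: der_sub.
move=> a; rewrite derg1 => /gen_prodgP [n [c cK ->]].
elim: n c cK => [|n IH] c cK.
  by rewrite big_ord0; exists 1%g; rewrite ?group1 // repr_mx1 phi1.
rewrite big_ord_recr /=.
have [h1 h1K e1] := IH (fun i => c (widen_ord (leqnSn n) i)) (fun i => cK _).
have cG : c ord_max \in G.
  apply: (subsetP sK1G); rewrite derg1; apply: mem_gen; exact: cK.
have pG : (\prod_(i < n) c (widen_ord (leqnSn n) i))%g \in G.
  apply: (subsetP sK1G); rewrite derg1; apply: group_prod => i _; apply: mem_gen; exact: cK.
case/imset2P: (cK ord_max) => x y xK yK cxy.
have xG := subsetP sKG x xK; have yG := subsetP sKG y yK.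
have [hx hxK ex] := sK x xK; have [hy hyK ey] := sK y yK.
have hxG := subsetP sKG hx hxK; have hyG := subsetP sKG hy hyK.
exists (h1 * [~ hx, hy])%g.
  by rewrite groupM // mem_commg.
have h1G : h1 \in G by apply: (subsetP sK1G); rewrite derg1.
rewrite repr_mxM // phiM e1 cxy (repr_mxM _ h1G (groupR hxG hyG)); congr (_ *m _).
rewrite !commgEl !conjgE !repr_mxM ?groupV ?groupM //.
rewrite !phiM (Stab_inv sKG xK hxK ex) (Stab_inv sKG yK hyK ey) ex ey.
by []. all: by rewrite groupV.
Qed.

Lemma Stab_derived k : Stab (G^`(k))%g.
Proof.
elim: k => [|k IH]; first by rewrite derg0; exact: StabG.
rewrite dergSn -derg1; apply: Stab_der => //; exact: der_sub.
Qed.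

End StepA.

Lemma rG_conj (gT : finGroupType) (G : {group gT}) (d : nat)
  (rG : mx_representation R G d) a y : a \in G -> y \in G ->
  rG (a ^ y)%g = invmx (rG y) *m rG a *m rG y.
Proof.
move=> aG yG; rewrite conjgE !repr_mxM ?groupV ?groupM // ?repr_mxV //.
by rewrite mulmxA.
Qed.

Theorem corollary3 (gT : finGroupType) (G : {group gT}) :
  solvable G -> E1_group G.
Proof.
move=> solG d rG irr nt oddd N nN.
have Nu := N_unit nN.
have /derivedP [n Gn1] := solG.
pose Pk k := [forall a in G^`(k)%g, rG a == 1%:M].
have exP : exists k, Pk k.
  exists n; apply/forall_inP => a; rewrite Gn1 => /set1P ->.
  by rewrite repr_mx1.
case: (ex_minnP exP) => k Pk_k minK.
case: k Pk_k minK => [|k] Pk_k minK.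
  case: nt => g gG; move/forall_inP: Pk_k => /(_ g); rewrite derg0 => /(_ gG).
  by move=> ->.
set D := (G^`(k))%G.
have DG : D \subset G by exact: der_sub.
have nDG : G \subset 'N(D)%g by apply: normal_norm; exact: der_normal.
have StD : Stab rG N D by exact: Stab_derived.
have [a0 a0D a0n] : exists2 a0, a0 \in D & rG a0 != 1%:M.
  have : ~~ Pk k by apply/negP => /minK; rewrite ltnn.
  by move/forall_inPn => [a aD na]; exists a.
have Dcomm a b : a \in D -> b \in D -> rG a *m rG b = rG b *m rG a.
  move=> aD bD.
  have aG := subsetP DG a aD; have bG := subsetP DG b bD.
  have cD : [~ a, b]%g \in G^`(k.+1)%g by rewrite dergSn mem_commg.
  have cG : [~ a, b]%g \in G by apply: (subsetP (der_sub _ _)) cD.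
  move/forall_inP: Pk_k => /(_ _ cD) /eqP c1.
  by rewrite -!repr_mxM // (commgC a b) (repr_mxM _ (groupM bG aG) cG) c1 mulmx1.
have a0G := subsetP DG a0 a0D.
pose Q j := (0 < j)%N && (rG a0 ^+ j == 1%:M).
have exQ : exists j, Q j.
  exists #[a0]%g; rewrite /Q order_gt0 -repr_X // expg_order repr_mx1 eqxx.
  by [].
case: (ex_minnP exQ) => m /andP [m0 /eqP am] minm.
have m1 : (1 < m)%N.
  rewrite ltn_neqAle eq_sym m0 andbT; apply/eqP => m1.
  by move: am a0n; rewrite m1 expr1 => ->; rewrite eqxx.
set p := pdiv m.
have pr : prime p by exact: pdiv_prime.
set a1 := (a0 ^+ (m %/ p))%g.
have a1D : a1 \in D by rewrite groupX.
have a1G := subsetP DG a1 a1D.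
have a1p : rG a1 ^+ p = 1%:M.
  by rewrite repr_X // -exprM divnK ?pdiv_dvd.
have a1n : rG a1 != 1%:M.
  apply/eqP => e.
  have p1 : (1 < p)%N by exact: prime_gt1.
  have pm : (p <= m)%N by apply: dvdn_leq; [exact: ltnW | exact: pdiv_dvd].
  have : Q (m %/ p)%N.
    rewrite /Q divn_gt0 ?(ltnW p1) // pm /=.
    by rewrite -repr_X // -/a1 e.
  move/minm; rewrite leqNgt ltn_Pdiv //; exact: ltnW.
set A := [set a in D | rG a ^+ p == 1%:M].
have AD : A \subset D by apply/subsetP => a; rewrite inE => /andP [].
have AG : A \subset G := subset_trans AD DG.
have a1A : a1 \in A by rewrite inE a1D a1p eqxx.
have Acomm a b : a \in A -> b \in A -> rG a *m rG b = rG b *m rG a.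
  by move=> aA bA; apply: Dcomm; apply: (subsetP AD).
have Ap a : a \in A -> rG a ^+ p = 1%:M by rewrite inE => /andP [_ /eqP].
have AJ a h : a \in A -> h \in G -> (a ^ h)%g \in A.
  move=> aA hG; have aD := subsetP AD a aA; have aG := subsetP AG a aA.
  rewrite inE memJ_norm ?(subsetP nDG) // aD /=.
  rewrite -repr_X ?groupJ // -conjXg rG_conj ?groupX // repr_X // Ap //.
  by rewrite mulmx1 mulVmx ?repr_mx_unit.
have AJm a h : a \in A -> h \in G ->
    rG h *m rG a = rG (a ^ (h^-1))%g *m rG h.
  move=> aA hG; have aG := subsetP AG a aA.
  rewrite rG_conj ?groupV // repr_mxV // invmxK -!mulmxA -repr_mxM ?groupV //.
  by rewrite mulVmx ?repr_mx_unit // mulmx1 repr_mxM.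
have AN a : a \in A -> exists2 b, b \in A & N *m rG a = rG b *m N.
  move=> aA; have aD := subsetP AD a aA.
  have [b bD e] := StD a aD.
  exists b; last by rewrite -e /phi mulmxKV.
  by rewrite inE bD -e -(phiX nN) Ap // (phi1 nN) eqxx.
have [p2|podd] := even_prime pr; last first.
  exfalso.
  set F := (\bigcap_(a <- enum A) kermx (rG a - 1%:M))%MS.
  have oF : odd (\rank F).
    have fp t : t \in enum A -> rG t ^+ p = 1%:M by rewrite mem_enum; exact: Ap.
    have fc t u : t \in enum A -> u \in enum A -> rG t *m rG u = rG u *m rG t.
      by rewrite !mem_enum; exact: Acomm.
    have := parity_list podd fp fc (fun t _ => submx1 (1%:M *m rG t)).
    by rewrite cap1mx mxrank1 oddd.
  have F0 : F != 0 by rewrite -mxrank_eq0; apply/eqP => e; rewrite e in oF.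
  have FE : F = (\bigcap_(a in A) kermx (rG a - 1%:M))%MS by rewrite /F big_enum.
  have mF : mxmodule rG F.
    apply/mxmoduleP => h hG; rewrite [X in (_ <= X)%MS]FE; apply/sub_bigcapmxP => a aA.
    rewrite sub_kermx -mulmxA mulmxBr mulmx1 AJm //.
    rewrite -{2}(mul1mx (rG h)) -mulmxBl mulmxA.
    have : (F <= kermx (rG (a ^ h^-1)%g - 1%:M))%MS.
      by rewrite FE; apply: (bigcapmx_inf (a ^ h^-1)%g) => //; rewrite AJ ?groupV.
    by rewrite sub_kermx => /eqP ->; rewrite mul0mx.
  case/mx_irrP: irr => _ /(_ F mF F0); rewrite -sub1mx FE.
  move/sub_bigcapmxP => /(_ a1 a1A); rewrite sub_kermx mul1mx subr_eq0.
  by rewrite (negbTE a1n).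
pose I := {a : gT | a \in A}.
pose M (i : I) := rG (val i).
apply: (@stepB gT G d rG N I M) => //.
- by move=> i j; apply: Acomm; apply: valP.
- by move=> i; have := Ap _ (valP i); rewrite p2 expr2 mulmxE.
- by move=> i; exists (val i) => //; apply: (subsetP AG); apply: valP.
- move=> h hG.
  have H (i : I) : exists j : I, rG h *m M i = M j *m rG h.
    have aA := valP i.
    by exists (exist (fun x => x \in A) _ (AJ _ _ aA (groupVr hG))); exact: AJm.
  have [f Hf] := fin_all_exists H; by exists f.
- have H (i : I) : exists j : I, N *m M i = M j *m N.
    have [b bA e] := AN _ (valP i).
    by exists (exist (fun x => x \in A) b bA).
  have [f Hf] := fin_all_exists H; by exists f.
- by exists (exist (fun x => x \in A) a1 a1A).
Qed.
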